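(* Let $K$ be a field and assume: (1) $A$ is a (left and right) noetherian $K$-algebra without zero divisors; (2) $w\in A$ is a nonzero normal element, i.e. $wA=Aw$, and $\sigma$ is the automorphism of $A$ with $wy=\sigma(y)w$ for all $y\in A$; (3) $J$ is a maximal left ideal of $A$ such that $w-\mu\in J$ for some nonzero $\mu\in K$. Let $x\in A$ be a nonzero non-unit, set $I=Jx$, $L=Ax/I$, $M=A/I$, $N=A/Ax$, so that there is a short exact sequence $0\to L\to M\to N\to 0$ of left $A$-modules. Assume further: (4) for every integer $m\ge 0$ there is no $a\in A$ with $\sigma^m(x)a-1\in J$; (5) $N\supsetneq wN\supsetneq w^2N\supsetneq\cdots\supsetneq w^mN\supsetneq\cdots$ is a strictly descending chain of submodules of $N$; (6) every nonzero submodule of $N$ contains $w^mN$ for some $m\ge 0$. Then $M$ is an essential extension of $L$, i.e. every nonzero submodule of $M$ intersects $L$ nontrivially (equivalently, every left ideal of $A$ strictly containing $I$ contains $Ax$).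
   Context: An element $w$ of a ring $A$ is normal if $wA=Aw$. For a normal element $w$ and a left $A$-module $N$, $w^mN$ is a submodule of $N$. *)

(* Defs.v *)
From HB Require Import structures.
From mathcomp Require Import all_boot all_order all_algebra.
Set Implicit Arguments. Unset Strict Implicit. Unset Printing Implicit Defensive.
Import GRing.Theory.
Local Open Scope ring_scope.

Section Defs.
Variable A : pzRingType.

Definition left_ideal (S : A -> Prop) : Prop :=
  S 0 /\ (forall a b, S a -> S b -> S (a + b)) /\ (forall r a, S a -> S (r * a)).
Definition right_ideal (S : A -> Prop) : Prop :=
  S 0 /\ (forall a b, S a -> S b -> S (a + b)) /\ (forall r a, S a -> S (a * r)).

Definition left_noetherian : Prop :=
  forall C : nat -> A -> Prop, (forall n, left_ideal (C n)) ->
    (forall n a, C n a -> C n.+1 a) ->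
    exists n0, forall n, (n0 <= n)%N -> forall a, C n a <-> C n0 a.
Definition right_noetherian : Prop :=
  forall C : nat -> A -> Prop, (forall n, right_ideal (C n)) ->
    (forall n a, C n a -> C n.+1 a) ->
    exists n0, forall n, (n0 <= n)%N -> forall a, C n a <-> C n0 a.

Definition no_zero_divisors : Prop :=
  forall a b : A, a * b = 0 -> a = 0 \/ b = 0.

Definition normal_elt (w : A) : Prop :=
  forall a, (exists b, w * a = b * w) /\ (exists b, a * w = w * b).

Definition maximal_left_ideal (J : A -> Prop) : Prop :=
  left_ideal J /\ ~ J 1 /\
  forall Q, left_ideal Q -> (forall a, J a -> Q a) ->
    (forall a, Q a <-> J a) \/ (forall a, Q a).

Definition is_unit (x : A) : Prop := exists y, x * y = 1 /\ y * x = 1.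

Definition mul_right_set (J : A -> Prop) (x : A) : A -> Prop :=
  fun a => exists j, J j /\ a = j * x.
Definition left_principal (x : A) : A -> Prop := fun a => exists r, a = r * x.

(* preimage in A of the submodule w^m N of N = A/Ax *)
Definition wpow_quot (w x : A) (m : nat) : A -> Prop :=
  fun a => exists b c, a = w ^+ m * b + c * x.
End Defs.

(* Main.v *)
Require Import Defs.
From HB Require Import structures.
From mathcomp Require Import all_boot all_order all_algebra.
From Stdlib Require Import Classical.
Import GRing.Theory.
Local Open Scope ring_scope.

Lemma wpow_comm (A : pzRingType) (w : A) (sigma : A -> A)
  (Hsig : forall y : A, w * y = sigma y * w) (m : nat) (y : A) :
  w ^+ m * y = iter m sigma y * w ^+ m.
Proof.
elim: m => [|m IH]; first by rewrite expr0 mul1r mulr1.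
by rewrite exprS -mulrA IH mulrA Hsig iterS -mulrA.
Qed.

Lemma wpow_J (K : fieldType) (A : algType K) (J : A -> Prop)
  (HJ : left_ideal J) (w : A) (mu : K) (HwJ : J (w - mu%:A)) (m : nat) :
  J (w ^+ m - (mu ^+ m)%:A).
Proof.
case: HJ => [J0 [JD JM]].
elim: m => [|m IH]; first by rewrite expr0 expr0 scale1r subrr.
have -> : w ^+ m.+1 - (mu ^+ m.+1)%:A =
   w ^+ m * (w - mu%:A) + mu%:A * (w ^+ m - (mu ^+ m)%:A).
  rewrite mulrBr mulrBr mulr_algr mulr_algl -exprSr addrA subrK.
  by rewrite mulr_algl scalerA -exprS.
by apply: JD; apply: JM.
Qed.

Theorem theorem2p2 (K : fieldType) (A : algType K)
  (HlN : left_noetherian A) (HrN : right_noetherian A)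
  (Hdom : no_zero_divisors A)
  (w : A) (Hw0 : w != 0) (Hwn : normal_elt w)
  (sigma : {rmorphism A -> A}) (Hsig_bij : bijective sigma)
  (Hsig_lin : forall (k : K) (y : A), sigma (k *: y) = k *: sigma y)
  (Hsig : forall y : A, w * y = sigma y * w)
  (J : A -> Prop) (HJ : maximal_left_ideal J)
  (mu : K) (Hmu0 : mu != 0) (HwJ : J (w - mu%:A))
  (x : A) (Hx0 : x != 0) (Hxu : ~ is_unit x)
  (H4 : forall m : nat, ~ (exists a : A, J (iter m sigma x * a - 1)))
  (H5 : forall m : nat, (forall a, wpow_quot w x m.+1 a -> wpow_quot w x m a) /\
                        (exists a, wpow_quot w x m a /\ ~ wpow_quot w x m.+1 a))
  (H6 : forall Q : A -> Prop, left_ideal Q ->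
          (forall a, left_principal x a -> Q a) ->
          (exists a, Q a /\ ~ left_principal x a) ->
          exists m : nat, forall a, wpow_quot w x m a -> Q a) :
  forall Q : A -> Prop, left_ideal Q ->
    (forall a, mul_right_set J x a -> Q a) ->
    (exists a, Q a /\ ~ mul_right_set J x a) ->
    exists a, Q a /\ left_principal x a /\ ~ mul_right_set J x a.
Proof.
move=> Q HQ HQJ [a0 [Qa0 na0]].
have HQ' := HQ; case: HQ' => [Q0 [QD QM]].
have HJl : left_ideal J by case: HJ.
have HJl' := HJl; case: HJl' => [J0 [JD JM]].
have JB : forall a b, J a -> J b -> J (a - b).
  move=> a b Ja Jb; apply: JD => //; rewrite -mulN1r; exact: JM.
destruct (classic (exists a, Q a /\ ~ left_principal x a)) as [[a1 [Qa1 na1]]|Hn];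
  last first.
  exists a0; split; [done|split; last done].
  apply NNPP => H; apply Hn; exists a0; by split.
pose Q' := fun a => exists q r, Q q /\ a = q + r * x.
have HQ'l : left_ideal Q'.
  split; first by exists 0, 0; rewrite mul0r addr0.
  split.
    move=> a b [q [r [Qq ->]]] [q' [r' [Qq' ->]]].
    exists (q + q'), (r + r'); split; first exact: QD.
    by rewrite mulrDl addrACA.
  move=> s a [q [r [Qq ->]]]; exists (s * q), (s * r); split; first exact: QM.
  by rewrite mulrDr mulrA.
have [m Hm] : exists m : nat, forall a, wpow_quot w x m a -> Q' a.
  apply: H6 => //.
    by move=> a [r ->]; exists 0, r; rewrite add0r.
  exists a1; split => //; exists a1, 0; by rewrite mul0r addr0.
have [q [r [Qq Heq]]] : Q' (w ^+ m).
  by apply: Hm; exists 1, 0; rewrite mulr1 mul0r addr0.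
apply NNPP => Hno.
have key : forall a, Q a -> left_principal x a -> mul_right_set J x a.
  move=> a Qa La; apply NNPP => Hna; apply Hno; exists a; by split.
set s := iter m sigma x.
have Hwx : w ^+ m * x = s * w ^+ m by rewrite (wpow_comm _ _ _ Hsig).
have [j [Jj Hj]] : mul_right_set J x (s * q).
  apply: key; first exact: QM.
  exists (w ^+ m - s * r).
  have -> : q = w ^+ m - r * x by rewrite Heq addrK.
  by rewrite mulrBr mulrBl Hwx mulrA.
have Hc : w ^+ m - s * r = j.
  have Hq : q = w ^+ m - r * x by rewrite Heq addrK.
  have : (w ^+ m - s * r - j) * x = 0.
    rewrite mulrBl -Hj Hq mulrBr mulrBl Hwx mulrA subrr //.
  move/Hdom => [/eqP|/eqP]; last by rewrite (negbTE Hx0).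
  by rewrite subr_eq0 => /eqP.
have J1 : J ((mu ^+ m)%:A - s * r).
  have := JB _ _ Jj (wpow_J _ _ _ HJl _ _ HwJ m).
  by rewrite -Hc opprB addrC subrKA.
have Hmum : mu ^+ m != 0 by rewrite expf_neq0.
apply: (H4 m); exists (r * ((mu ^+ m)^-1)%:A).
have := JM (- ((mu ^+ m)^-1)%:A) _ J1.
rewrite mulNr mulrBr mulr_algl scalerA mulVf // scale1r opprB.
by rewrite mulr_algl mulr_algr scalerAr.
Qed.
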